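(* If a subset $\mathcal S\subseteq\mathbb{R}^3$ generated by a pair of distinct lines is planar (contained in a plane), then $\mathcal S$ has a unique pair of generating lines. Moreover, letting $d$ be the distance between the two half planes that comprise $\mathcal S$, the generating lines are the two parallel lines in the $xy$-plane at distance $d/2$ from the projection of $\mathcal S$ to the $xy$-plane.
   Context: For distinct lines $L_1,L_2$ in the plane, the subset of $\mathbb{R}^3$ generated by them is the set of all points $(x,y,\pm z)$ such that $2z$ is the length of a line segment with one endpoint on $L_1$, the other on $L_2$, and midpoint $(x,y)$; $L_1,L_2$ are called a pair of generating lines for this set. *)

(* Defs.v *)
From Stdlib Require Import Reals.
Open Scope R_scope.

Definition pt2 : Type := (R * R)%type.
Definition pt3 : Type := (R * R * R)%type.

Definition dist2 (p q : pt2) : R :=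
  sqrt ((fst p - fst q) ^ 2 + (snd p - snd q) ^ 2).
Definition dist3 (p q : pt3) : R :=
  let '(x1, y1, z1) := p in let '(x2, y2, z2) := q in
  sqrt ((x1 - x2) ^ 2 + (y1 - y2) ^ 2 + (z1 - z2) ^ 2).

Definition same_set {T : Type} (A B : T -> Prop) : Prop := forall p, A p <-> B p.

Definition is_line (L : pt2 -> Prop) : Prop :=
  exists a b vx vy : R, (vx <> 0 \/ vy <> 0) /\
    forall p : pt2, L p <-> exists t : R, p = (a + t * vx, b + t * vy).

Definition parallel (L M : pt2 -> Prop) : Prop :=
  exists vx vy : R, (vx <> 0 \/ vy <> 0) /\
    (forall p t, L p -> L (fst p + t * vx, snd p + t * vy)) /\
    (forall p t, M p -> M (fst p + t * vx, snd p + t * vy)).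

Definition is_set_dist {T : Type} (dist : T -> T -> R) (A B : T -> Prop) (d : R) : Prop :=
  (forall a b, A a -> B b -> d <= dist a b) /\
  (forall e, d < e -> exists a b, A a /\ B b /\ dist a b < e).

Definition is_half_plane (H : pt3 -> Prop) : Prop :=
  exists a1 a2 a3 u1 u2 u3 v1 v2 v3 : R,
    (u2 * v3 - u3 * v2 <> 0 \/ u3 * v1 - u1 * v3 <> 0 \/ u1 * v2 - u2 * v1 <> 0) /\
    forall p : pt3, H p <-> exists s t : R, 0 <= t /\
      p = (a1 + s * u1 + t * v1, a2 + s * u2 + t * v2, a3 + s * u3 + t * v3).

Definition planar (S : pt3 -> Prop) : Prop :=
  exists a b c e : R, (a <> 0 \/ b <> 0 \/ c <> 0) /\
    forall x y z, S (x, y, z) -> a * x + b * y + c * z = e.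

Definition generated (L1 L2 : pt2 -> Prop) : pt3 -> Prop :=
  fun q => let '(x, y, w) := q in
    exists P Q : pt2, L1 P /\ L2 Q /\
      (fst P + fst Q) / 2 = x /\ (snd P + snd Q) / 2 = y /\
      exists z : R, 2 * z = dist2 P Q /\ (w = z \/ w = - z).

Definition generating_pair (S : pt3 -> Prop) (L1 L2 : pt2 -> Prop) : Prop :=
  is_line L1 /\ is_line L2 /\ ~ same_set L1 L2 /\ same_set (generated L1 L2) S.

Definition proj_xy (S : pt3 -> Prop) : pt2 -> Prop :=
  fun p => exists w : R, S (fst p, snd p, w).

(* Main.v *)
Require Import Defs.
From Stdlib Require Import Reals Lra Classical.
Open Scope R_scope.

Definition sg (A B : R) (p : pt2) : R := A * fst p + B * snd p.

Lemma N_pos A B : A <> 0 \/ B <> 0 -> 0 < A*A + B*B.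
Proof.
  intros [h|h]; pose proof (Rsqr_pos_lt _ h); unfold Rsqr in *;
  [pose proof (Rle_0_sqr B) | pose proof (Rle_0_sqr A)]; unfold Rsqr in *; lra.
Qed.

Lemma line_perp (L : pt2 -> Prop) A B x0 y0 u v :
  (A <> 0 \/ B <> 0) -> (u <> 0 \/ v <> 0) -> A*u + B*v = 0 ->
  (forall p, L p <-> exists t, p = (x0 + t*u, y0 + t*v)) ->
  forall p, L p <-> sg A B p = A*x0 + B*y0.
Proof.
  intros HAB Huv Hperp HL [px py]. rewrite HL. unfold sg; simpl. split.
  - intros [t Ht]. injection Ht as -> ->.
    transitivity (A*x0+B*y0 + t*(A*u+B*v)); [ring | rewrite Hperp; ring].
  - intros Hs.
    assert (Hd: A*(px-x0) + B*(py-y0) = 0) by lra.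
    assert (Hc: (px-x0)*v - (py-y0)*u = 0).
    { assert (E1: A*((px-x0)*v-(py-y0)*u) = v*(A*(px-x0)+B*(py-y0)) - (py-y0)*(A*u+B*v)) by ring.
      assert (E2: B*((px-x0)*v-(py-y0)*u) = -u*(A*(px-x0)+B*(py-y0)) + (px-x0)*(A*u+B*v)) by ring.
      rewrite Hd, Hperp in E1, E2.
      destruct HAB as [h|h].
      - destruct (Rmult_integral _ _ (eq_trans E1 (ltac:(ring) : v*0 - (py-y0)*0 = 0))); auto; contradiction.
      - destruct (Rmult_integral _ _ (eq_trans E2 (ltac:(ring) : -u*0 + (px-x0)*0 = 0))); auto; contradiction. }
    destruct Huv as [hu|hv].
    + exists ((px-x0)/u). f_equal; [field; auto|].
      replace ((px-x0)/u*v) with ((px-x0)*v/u) by (field; auto).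
      replace ((px-x0)*v) with ((py-y0)*u) by lra. field; auto.
    + exists ((py-y0)/v). f_equal; [|field; auto].
      replace ((py-y0)/v*u) with ((py-y0)*u/v) by (field; auto).
      replace ((py-y0)*u) with ((px-x0)*v) by lra. field; auto.
Qed.

Lemma gen_pt (L1 L2 : pt2 -> Prop) P Q z : L1 P -> L2 Q -> 2*z = dist2 P Q ->
  generated L1 L2 ((fst P+fst Q)/2, (snd P+snd Q)/2, z) /\
  generated L1 L2 ((fst P+fst Q)/2, (snd P+snd Q)/2, -z).
Proof.
  intros HP HQ Hz. split; simpl; exists P, Q; repeat split; auto; exists z; split; auto.
Qed.

Lemma dist2_0 P Q : dist2 P Q = 0 -> P = Q.
Proof.
  destruct P as [px py], Q as [qx qy]. unfold dist2; simpl. intro h.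
  pose proof (pow2_ge_0 (px-qx)); pose proof (pow2_ge_0 (py-qy)).
  apply sqrt_eq_0 in h; [| lra].
  assert (e1: (px-qx)*(px-qx) = 0) by lra. assert (e2: (py-qy)*(py-qy) = 0) by lra.
  apply Rmult_integral in e1. apply Rmult_integral in e2. f_equal; lra.
Qed.

Lemma plane_lines (L1 L2 : pt2 -> Prop) A B C E : is_line L1 -> is_line L2 ->
  (A<>0 \/ B<>0 \/ C<>0) ->
  (forall x y z, generated L1 L2 (x,y,z) -> A*x+B*y+C*z = E) ->
  C = 0 /\ (A <> 0 \/ B <> 0) /\ (exists k1, forall p, L1 p <-> sg A B p = k1)
  /\ (exists k2, forall p, L2 p <-> sg A B p = k2).
Proof.
  intros [a1 [b1 [u1 [v1 [Hn1 HL1]]]]] [a2 [b2 [u2 [v2 [Hn2 HL2]]]]] Hnz Hpl.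
  assert (HPQ: forall P Q, L1 P -> L2 Q -> C * dist2 P Q = 0 /\
            A*(fst P + fst Q) + B*(snd P + snd Q) = 2*E).
  { intros P Q HP HQ. destruct (gen_pt L1 L2 P Q (dist2 P Q / 2) HP HQ) as [G1 G2]; [field|].
    apply Hpl in G1. apply Hpl in G2. split; lra. }
  assert (P0: L1 (a1,b1)) by (apply HL1; exists 0; f_equal; ring).
  assert (P1: L1 (a1+u1,b1+v1)) by (apply HL1; exists 1; f_equal; ring).
  assert (Q0: L2 (a2,b2)) by (apply HL2; exists 0; f_equal; ring).
  assert (Q1: L2 (a2+u2,b2+v2)) by (apply HL2; exists 1; f_equal; ring).
  assert (HC: C = 0).
  { destruct (Req_dec C 0) as [h|h]; auto. exfalso.
    destruct (HPQ _ _ P0 Q0) as [e0 _]. destruct (HPQ _ _ P1 Q0) as [e1 _].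
    apply Rmult_integral in e0, e1. destruct e0 as [e0|e0]; [contradiction|].
    destruct e1 as [e1|e1]; [contradiction|].
    apply dist2_0 in e0, e1. rewrite <- e1 in e0. injection e0 as ex ey.
    destruct Hn1; apply H; lra. }
  assert (HAB: A <> 0 \/ B <> 0) by (destruct Hnz as [h|[h|h]]; auto; contradiction).
  destruct (HPQ _ _ P0 Q0) as [_ f00]. destruct (HPQ _ _ P1 Q0) as [_ f10].
  destruct (HPQ _ _ P0 Q1) as [_ f01]. simpl in *.
  repeat split; auto.
  - exists (A*a1+B*b1). apply (line_perp L1 A B a1 b1 u1 v1); auto. lra.
  - exists (A*a2+B*b2). apply (line_perp L2 A B a2 b2 u2 v2); auto. lra.
Qed.

Lemma gen_char (L1 L2 : pt2 -> Prop) A B k1 k2 : 0 < A*A+B*B ->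
  (forall p, L1 p <-> sg A B p = k1) -> (forall p, L2 p <-> sg A B p = k2) ->
  forall x y w, generated L1 L2 (x,y,w) <->
    A*x+B*y = (k1+k2)/2 /\ (k1-k2)^2 <= 4*(A*A+B*B)*w^2.
Proof.
  intros HN H1 H2 x y w. unfold generated; cbv beta iota. split.
  - intros [P [Q [HP [HQ [Hx [Hy [z [Hz Hw]]]]]]]]. apply H1 in HP; apply H2 in HQ.
    unfold sg in *. destruct P as [px py], Q as [qx qy]; cbn [fst snd] in *. subst x y.
    split; [lra|].
    assert (Hw2: w^2 = z^2) by (destruct Hw as [-> | ->]; ring).
    assert (Hd: (2*z)^2 = (px-qx)^2 + (py-qy)^2).
    { rewrite Hz; unfold dist2; simpl. apply pow2_sqrt.
      pose proof (pow2_ge_0 (px-qx)); pose proof (pow2_ge_0 (py-qy)); lra. }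
    rewrite Hw2.
    assert (CS: (A*px+B*py - (A*qx+B*qy))^2 + (-B*(px-qx) + A*(py-qy))^2
               = (A*A+B*B)*((px-qx)^2+(py-qy)^2)) by ring.
    rewrite HP, HQ in CS.
    replace (4*(A*A+B*B)*z^2) with ((A*A+B*B)*(2*z)^2) by ring.
    rewrite Hd, <- CS. pose proof (pow2_ge_0 (-B*(px-qx) + A*(py-qy))). lra.
  - intros [Hs Hw].
    assert (Hk2: k2 = 2*(A*x+B*y) - k1) by lra. subst k2.
    remember (sqrt (4*(A*A+B*B)*w^2 - (k1 - (2*(A*x+B*y) - k1))^2)) as d eqn:Hdd.
    assert (Hd: d*d = 4*(A*A+B*B)*w^2 - (k1 - (2*(A*x+B*y) - k1))^2)
      by (subst d; apply sqrt_sqrt; lra).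
    set (t := -B*x + A*y).
    exists ((A*k1 - B*(t + d/2))/(A*A+B*B), (B*k1 + A*(t+d/2))/(A*A+B*B)).
    exists ((A*(2*(A*x+B*y) - k1) - B*(t - d/2))/(A*A+B*B),
            (B*(2*(A*x+B*y) - k1) + A*(t-d/2))/(A*A+B*B)).
    split; [apply H1; unfold sg; simpl; field; lra|].
    split; [apply H2; unfold sg; simpl; field; lra|].
    simpl. split; [unfold t; field; lra|]. split; [unfold t; field; lra|].
    exists (Rabs w). split.
    + unfold dist2; simpl.
      match goal with |- _ = sqrt ?X => assert (E: X = (k1 - (2*(A*x+B*y) - k1))^2 / (A*A+B*B) + d*d/(A*A+B*B)) end.
      { field. lra. }
      rewrite E, Hd.
      replace ((k1 - (2 * (A * x + B * y) - k1)) ^ 2 / (A * A + B * B) +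
        (4 * (A * A + B * B) * w ^ 2 - (k1 - (2 * (A * x + B * y) - k1)) ^ 2) / (A * A + B * B))
        with (Rsqr (2*w)) by (unfold Rsqr; field; lra).
      rewrite sqrt_Rsqr_abs, Rabs_mult, (Rabs_pos_eq 2); lra.
    + destruct (Rcase_abs w); [right; rewrite Rabs_left | left; rewrite Rabs_right]; lra.
Qed.

Lemma sg_line A B m (L : pt2 -> Prop) : (A <> 0 \/ B <> 0) ->
  (forall p, L p <-> sg A B p = m) -> is_line L.
Proof.
  intros HAB HL. pose proof (N_pos A B HAB) as HN.
  exists (A*m/(A*A+B*B)), (B*m/(A*A+B*B)), (-B), A. split.
  { destruct HAB; [right; auto | left; lra]. }
  intros [px py]. rewrite HL. unfold sg; simpl. split.
  - intro Hs. exists ((-B*px + A*py)/(A*A+B*B)). rewrite <- Hs. f_equal; field; lra.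
  - intros [t Ht]. injection Ht as -> ->. field; lra.
Qed.

Lemma sg_parallel A B k k' (L M : pt2 -> Prop) : (A <> 0 \/ B <> 0) ->
  (forall p, L p <-> sg A B p = k) -> (forall p, M p <-> sg A B p = k') -> parallel L M.
Proof.
  intros HAB HL HM. exists (-B), A. split; [destruct HAB; [right; auto | left; lra]|].
  split; intros p t Hp; [apply HL; apply HL in Hp | apply HM; apply HM in Hp];
  unfold sg in *; simpl; rewrite <- Hp; ring.
Qed.

Lemma sg_dist A B k k' c (L M : pt2 -> Prop) : 0 < A*A+B*B -> 0 <= c ->
  c*c*(A*A+B*B) = (k-k')^2 ->
  (forall p, L p <-> sg A B p = k) -> (forall p, M p <-> sg A B p = k') ->
  is_set_dist dist2 L M c.
Proof.
  intros HN Hc Hcc HL HM. split.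
  - intros [px py] [qx qy] HP HQ. apply HL in HP; apply HM in HQ.
    unfold sg, dist2 in *; cbn [fst snd] in *.
    rewrite <- (sqrt_square c Hc). apply sqrt_le_1_alt.
    assert (CS: (A*px+B*py - (A*qx+B*qy))^2 + (-B*(px-qx) + A*(py-qy))^2
               = (A*A+B*B)*((px-qx)^2+(py-qy)^2)) by ring.
    rewrite HP, HQ in CS.
    apply (Rmult_le_reg_l (A*A+B*B)); auto. rewrite <- CS.
    pose proof (pow2_ge_0 (-B*(px-qx) + A*(py-qy))). lra.
  - intros e He. exists (A*k/(A*A+B*B), B*k/(A*A+B*B)), (A*k'/(A*A+B*B), B*k'/(A*A+B*B)).
    split; [apply HL; unfold sg; simpl; field; lra|].
    split; [apply HM; unfold sg; simpl; field; lra|].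
    unfold dist2; simpl.
    assert (E: c*c = (k-k')^2/(A*A+B*B)) by (rewrite <- Hcc; field; lra).
    match goal with |- sqrt ?X < e => replace X with (c*c) by (rewrite E; field; lra) end.
    rewrite sqrt_square; lra.
Qed.

Lemma set_dist_unique {T : Type} (dist : T -> T -> R) (X Y : T -> Prop) d d' :
  is_set_dist dist X Y d -> is_set_dist dist X Y d' -> d = d'.
Proof.
  intros [a1 b1] [a2 b2].
  destruct (Rtotal_order d d') as [h|[h|h]]; auto; exfalso.
  - destruct (b1 d' h) as [p [q [hp [hq hd]]]]. specialize (a2 p q hp hq). lra.
  - destruct (b2 d h) as [p [q [hp [hq hd]]]]. specialize (a1 p q hp hq). lra.
Qed.

Lemma half_plane_side (H : pt3 -> Prop) c : 0 < c -> is_half_plane H ->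
  (forall x y w, H (x,y,w) -> c <= Rabs w) ->
  (forall x y w, H (x,y,w) -> c <= w) \/ (forall x y w, H (x,y,w) -> w <= -c).
Proof.
  intros Hc [a1 [a2 [a3 [u1 [u2 [u3 [v1 [v2 [v3 [_ HH]]]]]]]]]] HS.
  assert (Hb: forall x y w, H (x,y,w) -> c <= w \/ w <= -c).
  { intros x y w h. apply HS in h.
    destruct (Rcase_abs w); [rewrite Rabs_left in h | rewrite Rabs_right in h]; lra. }
  destruct (classic (exists x y w, H (x,y,w) /\ w <= -c)) as [[x2 [y2 [w2 [Hp2 Hw2]]]] | Hno].
  - right. intros x y w Hp. destruct (Hb x y w Hp) as [Hw|Hw]; auto. exfalso.
    apply HH in Hp. apply HH in Hp2.
    destruct Hp as [s1 [t1 [Ht1 Heq1]]]. injection Heq1 as Ex1 Ey1 Ew1.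
    destruct Hp2 as [s2 [t2 [Ht2 Heq2]]]. injection Heq2 as Ex2 Ey2 Ew2.
    set (s := (s1*(-w2) + s2*w)/(w-w2)).
    set (t := (t1*(-w2) + t2*w)/(w-w2)).
    assert (Ht: 0 <= t).
    { unfold t, Rdiv. apply Rmult_le_pos; [nra | left; apply Rinv_0_lt_compat; lra]. }
    assert (Hin: H (a1 + s*u1 + t*v1, a2 + s*u2 + t*v2, a3 + s*u3 + t*v3))
      by (apply HH; exists s, t; auto).
    apply HS in Hin.
    assert (E: (a3 + s*u3 + t*v3) * (w - w2) = -w2*(a3+s1*u3+t1*v3) + w*(a3+s2*u3+t2*v3))
      by (unfold s, t; field; lra).
    rewrite <- Ew1, <- Ew2 in E.
    assert (E0: (a3 + s*u3 + t*v3) * (w - w2) = 0) by (rewrite E; ring).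
    apply Rmult_integral in E0. destruct E0 as [E0|E0]; [|lra].
    rewrite E0, Rabs_R0 in Hin. lra.
  - left. intros x y w Hp. destruct (Hb x y w Hp); auto. exfalso; apply Hno; exists x, y, w; auto.
Qed.

Lemma dist3_ge x1 y1 w1 x2 y2 w2 : Rabs (w1 - w2) <= dist3 (x1,y1,w1) (x2,y2,w2).
Proof.
  unfold dist3. rewrite <- sqrt_Rsqr_abs. apply sqrt_le_1_alt. unfold Rsqr.
  pose proof (pow2_ge_0 (x1-x2)); pose proof (pow2_ge_0 (y1-y2)). lra.
Qed.

Lemma dist_pair (H1 H2 : pt3 -> Prop) c x0 y0 w0 w0' :
  (forall x1 y1 w1 x2 y2 w2, H1 (x1,y1,w1) -> H2 (x2,y2,w2) -> 2*c <= Rabs (w1 - w2)) ->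
  H1 (x0,y0,w0) -> H2 (x0,y0,w0') -> Rabs (w0 - w0') = 2*c ->
  is_set_dist dist3 H1 H2 (2*c).
Proof.
  intros Hall h1 h2 he. split.
  - intros [[x1 y1] w1] [[x2 y2] w2] a b. eapply Rle_trans; [apply (Hall _ _ _ _ _ _ a b) | apply dist3_ge].
  - intros e He. exists (x0,y0,w0), (x0,y0,w0'). split; auto. split; auto.
    unfold dist3. replace ((x0 - x0) ^ 2 + (y0 - y0) ^ 2 + (w0 - w0') ^ 2) with (Rsqr (w0 - w0'))
      by (unfold Rsqr; ring). rewrite sqrt_Rsqr_abs. lra.
Qed.

Theorem corollary3p9 (L1 L2 : pt2 -> Prop) :
  is_line L1 -> is_line L2 -> ~ same_set L1 L2 ->
  planar (generated L1 L2) ->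
  (forall M1 M2 : pt2 -> Prop, generating_pair (generated L1 L2) M1 M2 ->
     (same_set M1 L1 /\ same_set M2 L2) \/ (same_set M1 L2 /\ same_set M2 L1)) /\
  (exists H1 H2 : pt3 -> Prop, is_half_plane H1 /\ is_half_plane H2 /\
     same_set (generated L1 L2) (fun p => H1 p \/ H2 p)) /\
  (forall (H1 H2 : pt3 -> Prop) (d : R),
     is_half_plane H1 -> is_half_plane H2 ->
     same_set (generated L1 L2) (fun p => H1 p \/ H2 p) ->
     is_set_dist dist3 H1 H2 d ->
     is_line (proj_xy (generated L1 L2)) /\
     parallel L1 (proj_xy (generated L1 L2)) /\
     parallel L2 (proj_xy (generated L1 L2)) /\
     is_set_dist dist2 L1 (proj_xy (generated L1 L2)) (d / 2) /\
     is_set_dist dist2 L2 (proj_xy (generated L1 L2)) (d / 2)).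
Proof.
  intros HL1 HL2 Hns [A [B [C [E [Hnz Hpl]]]]].
  destruct (plane_lines L1 L2 A B C E HL1 HL2 Hnz Hpl) as [HC [HAB [[k1 Hk1] [k2 Hk2]]]].
  pose proof (N_pos A B HAB) as HN.
  assert (Hk: k1 <> k2).
  { intro Heq; apply Hns; intro p; rewrite Hk1, Hk2, Heq; tauto. }
  pose proof (gen_char L1 L2 A B k1 k2 HN Hk1 Hk2) as Hch.
  assert (HD: 0 < (k1-k2)^2).
  { assert (k1 - k2 <> 0) by lra. pose proof (Rsqr_pos_lt _ H). unfold Rsqr in *. lra. }
  set (c := sqrt ((k1-k2)^2/(4*(A*A+B*B)))).
  assert (Hc0: 0 < c) by (apply sqrt_lt_R0; apply Rdiv_lt_0_compat; lra).
  assert (Hc4: c*c*(4*(A*A+B*B)) = (k1-k2)^2).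
  { unfold c. rewrite sqrt_sqrt; [field; lra | apply Rlt_le, Rdiv_lt_0_compat; lra]. }
  assert (Habs: forall w, (k1-k2)^2 <= 4*(A*A+B*B)*w^2 <-> c <= Rabs w).
  { intro w. assert (Ew: w^2 = Rabs w * Rabs w) by (change (Rabs w * Rabs w) with (Rsqr (Rabs w)); rewrite <- Rsqr_abs; unfold Rsqr; ring).
    pose proof (Rabs_pos w). rewrite Ew. split; intro h.
    - destruct (Rle_dec c (Rabs w)) as [|h']; auto. exfalso.
      assert (Rabs w * Rabs w < c * c) by nra. nra.
    - assert (c * c <= Rabs w * Rabs w) by nra. nra. }
  set (m := (k1+k2)/2).
  assert (Sch: forall x y w, generated L1 L2 (x,y,w) <-> A*x+B*y = m /\ c <= Rabs w).
  { intros x y w. rewrite Hch, Habs. tauto. }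
  set (x0 := A*m/(A*A+B*B)). set (y0 := B*m/(A*A+B*B)).
  assert (Hs0: A*x0 + B*y0 = m) by (unfold x0, y0; field; lra).
  assert (Hq1: generated L1 L2 (x0,y0,c)) by (apply Sch; split; auto; rewrite Rabs_right; lra).
  assert (Hq2: generated L1 L2 (x0,y0,-c))
    by (apply Sch; split; auto; rewrite Rabs_left; lra).
  split; [|split].
  -
    intros M1 M2 [HM1 [HM2 [HMns HMS]]].
    assert (HplM: forall x y z, generated M1 M2 (x,y,z) -> A*x+B*y+C*z = E).
    { intros x y z h. apply Hpl. apply HMS. exact h. }
    destruct (plane_lines M1 M2 A B C E HM1 HM2 Hnz HplM) as [_ [_ [[j1 Hj1] [j2 Hj2]]]].
    pose proof (gen_char M1 M2 A B j1 j2 HN Hj1 Hj2) as HchM.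
    assert (G1: generated M1 M2 (x0,y0,c)) by (apply HMS; exact Hq1).
    apply HchM in G1. destruct G1 as [G1a G1b].
    set (cj := sqrt ((j1-j2)^2/(4*(A*A+B*B)))).
    assert (Hcj: cj*cj*(4*(A*A+B*B)) = (j1-j2)^2).
    { unfold cj. rewrite sqrt_sqrt; [field; lra | ].
      apply Rmult_le_pos; [apply pow2_ge_0 | left; apply Rinv_0_lt_compat; lra]. }
    assert (G2: generated M1 M2 (x0,y0,cj)).
    { apply HchM. split; [lra|]. right. rewrite <- Hcj. ring. }
    apply HMS in G2. apply Hch in G2. destruct G2 as [_ G2b].
    assert (Heqs: j1 + j2 = k1 + k2) by (unfold m in Hs0; lra).
    assert (Heqd: (j1-j2)^2 = (k1-k2)^2).
    { apply Rle_antisym.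
      - replace ((k1-k2)^2) with (4*(A*A+B*B)*c^2) by (rewrite <- Hc4; ring). exact G1b.
      - replace ((j1-j2)^2) with (4*(A*A+B*B)*cj^2) by (rewrite <- Hcj; ring). exact G2b. }
    assert (Hprod: (j1 - k1) * (j1 - k2) = 0).
    { assert (j2 = k1 + k2 - j1) by lra. subst j2. nra. }
    apply Rmult_integral in Hprod. destruct Hprod as [h|h].
    + left. split; intro p; [rewrite Hj1, Hk1 | rewrite Hj2, Hk2]; split; intro; lra.
    + right. split; intro p; [rewrite Hj1, Hk2 | rewrite Hj2, Hk1]; split; intro; lra.
  -
    exists (fun q => exists s t, 0 <= t /\ q = (x0 + s*(-B) + t*0, y0 + s*A + t*0, c + s*0 + t*1)).
    exists (fun q => exists s t, 0 <= t /\ q = (x0 + s*(-B) + t*0, y0 + s*A + t*0, -c + s*0 + t*(-1))).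
    split; [|split].
    + exists x0, y0, c, (-B), A, 0, 0, 0, 1. split; [|intro; tauto].
      destruct HAB as [h|h]; [left | right; left]; intro; apply h; lra.
    + exists x0, y0, (-c), (-B), A, 0, 0, 0, (-1). split; [|intro; tauto].
      destruct HAB as [h|h]; [left | right; left]; intro; apply h; lra.
    + intros [[x y] w]. rewrite Sch. split.
      * intros [Hs Hw]. destruct (Rcase_abs w) as [hw|hw].
        -- rewrite Rabs_left in Hw by lra. right.
           exists ((-B*x + A*y)/(A*A+B*B)), (-w - c). split; [lra|].
           unfold x0, y0. rewrite <- Hs. f_equal; [f_equal|]; field; lra.
        -- rewrite Rabs_right in Hw by lra. left.
           exists ((-B*x + A*y)/(A*A+B*B)), (w - c). split; [lra|].
           unfold x0, y0. rewrite <- Hs. f_equal; [f_equal|]; field; lra.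
      * intros [[s [t [ht he]]] | [s [t [ht he]]]]; injection he as -> -> ->; split.
        -- rewrite <- Hs0. ring.
        -- rewrite Rabs_right; lra.
        -- rewrite <- Hs0. ring.
        -- rewrite Rabs_left; lra.
  - intros H1 H2 d HH1 HH2 HU Hd.
    assert (Hsub1: forall x y w, H1 (x,y,w) -> c <= Rabs w).
    { intros x y w h. assert (G: generated L1 L2 (x,y,w)) by (apply HU; left; exact h).
      apply Sch in G. tauto. }
    assert (Hsub2: forall x y w, H2 (x,y,w) -> c <= Rabs w).
    { intros x y w h. assert (G: generated L1 L2 (x,y,w)) by (apply HU; right; exact h).
      apply Sch in G. tauto. }
    assert (Hdc: d = 2*c).
    { destruct (half_plane_side H1 c Hc0 HH1 Hsub1) as [u1|l1];
      destruct (half_plane_side H2 c Hc0 HH2 Hsub2) as [u2|l2].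
      - exfalso. apply HU in Hq2. destruct Hq2 as [h|h]; [apply u1 in h | apply u2 in h]; lra.
      - apply (set_dist_unique dist3 H1 H2); auto.
        apply (dist_pair H1 H2 c x0 y0 c (-c)).
        + intros x1 y1 w1 x2 y2 w2 a b. apply u1 in a. apply l2 in b.
          pose proof (RRle_abs (w1 - w2)). lra.
        + apply HU in Hq1. destruct Hq1 as [h|h]; auto. apply l2 in h; lra.
        + apply HU in Hq2. destruct Hq2 as [h|h]; auto. apply u1 in h; lra.
        + rewrite Rabs_right; lra.
      - apply (set_dist_unique dist3 H1 H2); auto.
        apply (dist_pair H1 H2 c x0 y0 (-c) c).
        + intros x1 y1 w1 x2 y2 w2 a b. apply l1 in a. apply u2 in b.
          rewrite Rabs_minus_sym. pose proof (RRle_abs (w2 - w1)). lra.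
        + apply HU in Hq2. destruct Hq2 as [h|h]; auto. apply u2 in h; lra.
        + apply HU in Hq1. destruct Hq1 as [h|h]; auto. apply l1 in h; lra.
        + rewrite Rabs_left; lra.
      - exfalso. apply HU in Hq1. destruct Hq1 as [h|h]; [apply l1 in h | apply l2 in h]; lra. }
    assert (Hpr: forall p, proj_xy (generated L1 L2) p <-> sg A B p = m).
    { intros [px py]. unfold proj_xy, sg. cbn [fst snd]. split.
      - intros [w h]. apply Sch in h. tauto.
      - intro h. exists c. apply Sch. split; auto. rewrite Rabs_right; lra. }
    replace (d/2) with c by lra.
    split; [apply (sg_line A B m); auto|].
    split; [apply (sg_parallel A B k1 m); auto|].
    split; [apply (sg_parallel A B k2 m); auto|].
    split.
    + apply (sg_dist A B k1 m); auto; [lra | unfold m; lra].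
    + apply (sg_dist A B k2 m); auto; [lra | unfold m; lra].
Qed.
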